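(* Let $k$ be a field and let $d,m$ be integers with $d$ odd and $5\le d<m-1$. Set $a=(d+1)/2$. Then \[ k[\Delta(d,m)]\cong k[x_1,\dots,x_m]/(I_{a,2,m-1},\; x_1x_m I_{a-1,3,m-2}). \]
   Context: For integers $2\le d<m$, $\Delta(d,m)$ denotes the boundary simplicial complex of the cyclic polytope $C_d(m)$, the convex hull in $\mathbb{R}^d$ of $f(t_1),\dots,f(t_m)$ with $t_1<\dots<t_m$ real and $f(t)=(t,t^2,\dots,t^d)$; vertex $i$ corresponds to $f(t_i)$, and the faces are $\emptyset$ and the vertex sets of proper faces of $C_d(m)$. $k[\Delta]=k[x_1,\dots,x_m]/I_\Delta$ is the Stanley–Reisner ring, $I_\Delta$ being generated by the squarefree monomials $\prod_{t\in W}x_t$ with $W\notin\Delta$. For positive integers $a,p,q$ with $p<q$ and $2a\le q-p+2$, $I_{a,p,q}$ denotes the ideal generated by all monomials $x_{t_1}\cdots x_{t_a}$ with $p\le t_1$, $t_a\le q$ and $t_j+2\le t_{j+1}$ for $1\le j\le a-1$. *)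

(* Defs.v *)
From HB Require Import structures.
From mathcomp Require Import all_boot all_order all_algebra.
From mathcomp Require Import reals.
From mathcomp Require Import mpoly.

Set Implicit Arguments.
Unset Strict Implicit.
Unset Printing Implicit Defensive.

Import Order.TTheory GRing.Theory Num.Theory.
Local Open Scope ring_scope.

(* Vertex i (1 <= i <= m) of the paper is the ordinal [i-1 : 'I_m]. *)

(* The moment curve coordinate j (0-based, j < d) of f(t) = (t, t^2, ..., t^d). *)
(* [face_cyc d t W] : W is a face of Delta(d,m), i.e. W is empty, or W is the
   set of vertices lying on a supporting hyperplane  c . x = b  of the point
   set {f(t_i)} (all f(t_i) satisfy c . f(t_i) <= b), and this face is proper
   (W is not the whole vertex set).  Since all f(t_i) are vertices of C_d(m),
   the vertex set of the face C_d(m) ∩ H is exactly {i | f(t_i) ∈ H}. *)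
Definition face_cyc (R : realType) (d m : nat) (t : 'I_m -> R)
    (W : {set 'I_m}) : Prop :=
  W = set0 \/
  (W != setT /\
   exists (c : 'I_d -> R) (b : R),
     (forall i : 'I_m, \sum_(j < d) c j * t i ^+ j.+1 <= b) /\
     (forall i : 'I_m, i \in W <-> \sum_(j < d) c j * t i ^+ j.+1 = b)).

Definition in_gen_ideal (k : fieldType) (m : nat)
    (G : {mpoly k[m]} -> Prop) (p : {mpoly k[m]}) : Prop :=
  exists l : seq ({mpoly k[m]} * {mpoly k[m]}),
    (forall x, x \in l -> G x.2) /\ p = \sum_(x <- l) x.1 * x.2.

Definition monoW (k : fieldType) (m : nat) (W : {set 'I_m}) : {mpoly k[m]} :=
  \prod_(i in W) 'X_i.

Definition SR_gen (k : fieldType) (R : realType) (d m : nat) (t : 'I_m -> R)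
    (g : {mpoly k[m]}) : Prop :=
  exists W : {set 'I_m}, ~ face_cyc d t W /\ g = @monoW k m W.

(* The variable x_s for s in 1..m (1-based, as in the paper). *)
Definition xv (k : fieldType) (m : nat) (s : nat) : {mpoly k[m]} :=
  if (0 < s <= m)%N then \prod_(i : 'I_m | nat_of_ord i == s.-1) 'X_i else 0.

Definition Iapq_gen (k : fieldType) (m a p q : nat) (g : {mpoly k[m]}) : Prop :=
  exists s : seq nat,
    [/\ size s = a,
        (forall j, (j < a)%N -> p <= nth 0 s j <= q)%N,
        (forall j, (j.+1 < a)%N -> nth 0 s j + 2 <= nth 0 s j.+1)%N &
        g = \prod_(x <- s) @xv k m x].

Definition J_gen (k : fieldType) (m a : nat) (g : {mpoly k[m]}) : Prop :=
  @Iapq_gen k m a 2 m.-1 g \/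
  exists h, @Iapq_gen k m a.-1 3 (m - 2) h /\ g = @xv k m 1 * @xv k m m * h.

(* Main.v *)
Require Import Defs.
From HB Require Import structures.
From mathcomp Require Import all_boot all_order all_algebra.
From mathcomp Require Import reals.
From mathcomp Require Import mpoly.
From mathcomp Require Import ring lra zify.
From Stdlib Require Import Classical.
Import Order.TTheory GRing.Theory Num.Theory.
Local Open Scope ring_scope.

Section Roots.
Variable R : realType.

Lemma factor2 (Q : {poly R}) (x y z : R) : x < y -> y < z ->
  0 < Q.[x] -> Q.[y] = 0 -> 0 < Q.[z] ->
  exists y', exists Q', x < y' /\ y' < z /\
    Q = Q' * (('X - y%:P) * ('X - y'%:P)).
Proof.
move=> xy yz Qx Qy Qz.
have /factor_theorem [R1 eR1] : root Q y by apply/eqP.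
have R1x : R1.[x] < 0.
  move: Qx; rewrite eR1 hornerM !hornerE.
  have : x - y < 0 by rewrite subr_lt0.
  by move=> h1 h2; nra.
have R1z : 0 < R1.[z].
  move: Qz; rewrite eR1 hornerM !hornerE.
  have : 0 < z - y by rewrite subr_gt0.
  by move=> h1 h2; nra.
have [y' /andP [xy' y'z] ry'] : exists2 y', x <= y' <= z & root R1 y'.
  apply: poly_ivt; first by apply/ltW/(lt_trans xy).
  by rewrite (ltW R1x) (ltW R1z).
have /factor_theorem [Q' eQ'] := ry'.
exists y', Q'; split; last split.
- rewrite lt_neqAle xy' andbT; apply/eqP=> exy; move: ry'; rewrite /root -exy.
  by rewrite (lt_eqF R1x).
- rewrite lt_neqAle y'z andbT; apply/eqP=> exy; move: ry'; rewrite /root exy.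
  by rewrite (gt_eqF R1z).
- by rewrite eR1 eQ' -mulrA [_ * ('X - _)]mulrC.
Qed.

Variables (m : nat) (T : nat -> R).
Hypothesis incT : forall i j, (i < j)%N -> (j < m)%N -> T i < T j.

Lemma leT i j : (i <= j)%N -> (j < m)%N -> T i <= T j.
Proof.
rewrite leq_eqVlt => /orP [/eqP -> //|ij jm]; exact/ltW/(incT _ _ ij jm).
Qed.

Definition gaprel := fun i j : nat => (i.+2 <= j)%N.

Lemma gaprel_trans : transitive gaprel.
Proof. move=> y x z; rewrite /gaprel => h1 h2; apply: leq_trans h2; lia. Qed.

Lemma roots_gap (Q : {poly R}) (s : seq nat) :
  Q != 0 -> sorted gaprel s ->
  (forall j, j \in s -> [/\ (0 < j)%N, (j.+1 < m)%N, Q.[T j] = 0,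
       0 < Q.[T j.-1] & 0 < Q.[T j.+1]]) ->
  (2 * size s < size Q)%N.
Proof.
elim: s Q => [|j s IH] Q Qn0 srt H /=; first by rewrite size_poly_gt0.
have [j0 jm Qj Qjm Qjp] := H j (mem_head _ _).
have hj1 : (j.-1 < j)%N by lia.
have [y' [Q' [l1 [l2 eQ]]]] := factor2 Q _ _ _ (incT _ _ hj1 (ltnW jm)) (incT _ _ (ltnSn j) jm) Qjm Qj Qjp.
have Q'n0 : Q' != 0 by apply: contraNneq Qn0 => e; rewrite eQ e mul0r.
have sz : size Q = (size Q').+2.
  rewrite eQ size_mul // ?mulf_neq0 ?polyXsubC_eq0 //.
  by rewrite size_mul ?polyXsubC_eq0 // !size_XsubC /= addn3.
have pos : forall p, (j.+1 <= p)%N -> (p < m)%N ->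
    0 < ((T p - T j) * (T p - y')).
  move=> p jp pm; have := leT _ _ jp pm; have := incT _ _ (ltnSn j) jm => h1 h2.
  by apply: mulr_gt0; rewrite subr_gt0; [exact: lt_le_trans h1 h2| exact: lt_le_trans l2 h2].
have ev : forall p, (j.+1 <= p)%N -> (p < m)%N -> Q.[T p] = Q'.[T p] * ((T p - T j) * (T p - y')).
  by move=> p _ _; rewrite eQ !hornerE.
rewrite sz mulnS ltnS; apply: (IH Q' Q'n0 (path_sorted srt)) => k ks.
have jk : (j.+2 <= k)%N.
  have := order_path_min gaprel_trans srt; move/allP/(_ k ks); done.
have [k0 km Qk Qkm Qkp] := H k (mem_behead (ks : k \in behead (j :: s))).
have km1 : (j.+1 <= k.-1)%N by lia.
have hk1 : (j.+1 <= k)%N by lia.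
split => //.
- by move: Qk; rewrite (ev k hk1 (ltnW km)) => /eqP; rewrite mulf_eq0 (gt_eqF (pos _ hk1 (ltnW km))) orbF => /eqP.
- by move: Qkm; rewrite (ev _ km1 (leq_ltn_trans (leq_pred _) (ltnW km))) pmulr_lgt0 // pos // (leq_ltn_trans (leq_pred _) (ltnW km)).
- by move: Qkp; rewrite (ev _ (leqW hk1) km) pmulr_lgt0 // pos // leqW.
Qed.
End Roots.

Section Conv.
Variables (R : realType) (d m : nat) (t : 'I_m -> R).

Lemma face_to_poly (W : {set 'I_m}) : face_cyc d t W ->
  W = set0 \/ (W != setT /\ exists Q : {poly R}, (size Q <= d.+1)%N /\
    (forall i, 0 <= Q.[t i]) /\ (forall i, i \in W <-> Q.[t i] = 0)).
Proof.
case=> [->|[WT [c [b [H1 H2]]]]]; [by left|right; split=> //].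
exists (b%:P - \sum_(j < d) c j *: 'X^(j.+1)).
have ev : forall x, (b%:P - \sum_(j < d) c j *: 'X^(j.+1)).[x] =
   b - \sum_(j < d) c j * x ^+ j.+1.
  move=> x; rewrite hornerD hornerN hornerC horner_sum; congr (_ - _).
  by apply: eq_bigr => j _; rewrite hornerZ hornerXn.
split; last split.
- apply: leq_trans (size_polyD _ _) _; rewrite size_polyN geq_max; apply/andP; split.
    by apply: leq_trans (size_polyC_leq1 _) _.
  apply: leq_trans (size_sum _ _ _) _; apply/bigmax_leqP => j _.
  by apply: leq_trans (size_scale_leq _ _) _; rewrite size_polyXn ltnS.
- by move=> i; rewrite ev subr_ge0.
- by move=> i; rewrite ev H2; split=> [->|/eqP]; [rewrite subrr|rewrite subr_eq0 => /eqP ->].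
Qed.

Lemma poly_to_face (W : {set 'I_m}) (Q : {poly R}) : W != setT ->
  (size Q <= d.+1)%N -> (forall i, 0 <= Q.[t i]) ->
  (forall i, i \in W <-> Q.[t i] = 0) -> face_cyc d t W.
Proof.
move=> WT sQ H1 H2; right; split=> //.
exists (fun j : 'I_d => - Q`_(j.+1)), (Q`_0).
have ev : forall x, \sum_(j < d) - Q`_(j.+1) * x ^+ j.+1 = Q`_0 - Q.[x].
  move=> x; rewrite (horner_coef_wide _ sQ) big_ord_recl expr0 mulr1.
  rewrite opprD addrA subrr add0r -sumrN; apply: eq_bigr => j _.
  by rewrite mulNr.
split=> i; rewrite ev.
- by rewrite lerBlDr lerDl.
- rewrite H2; split=> [->|]; first by rewrite subr0.
  by move/eqP; rewrite subr_eq addrC -subr_eq subrr eq_sym => /eqP.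
Qed.
End Conv.

Section Ideal.
Variables (k : fieldType) (m : nat).
Implicit Types G : {mpoly k[m]} -> Prop.

Lemma ideal_gen G g : G g -> in_gen_ideal G g.
Proof.
move=> Gg; red; exists [:: (1, g)]; split; last by rewrite big_seq1 mul1r.
by move=> x; rewrite inE => /eqP ->.
Qed.

Lemma ideal_mul G g h : in_gen_ideal G g -> in_gen_ideal G (h * g).
Proof.
case=> l [Hl ->]; red; exists [seq (h * x.1, x.2) | x <- l]; split.
  by move=> x /mapP [y yl ->]; exact: (Hl y yl).
by rewrite big_map mulr_sumr; apply: eq_bigr => x _; rewrite mulrA.
Qed.

Lemma ideal_add G g h : in_gen_ideal G g -> in_gen_ideal G h -> in_gen_ideal G (g + h).
Proof.
case=> l [Hl ->] [l' [Hl' ->]]; red; exists (l ++ l'); split; last by rewrite big_cat.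
by move=> x; rewrite mem_cat => /orP [] ?; [exact: Hl|exact: Hl'].
Qed.

Lemma ideal_trans G G' p : (forall g, G g -> in_gen_ideal G' g) ->
  in_gen_ideal G p -> in_gen_ideal G' p.
Proof.
move=> HG [l [Hl ->]]; elim: l Hl => [|x l IH] Hl.
  by rewrite big_nil; red; exists [::]; rewrite big_nil.
rewrite big_cons; apply: ideal_add.
  by apply: ideal_mul; apply: HG; apply: Hl; rewrite mem_head.
by apply: IH => y yl; apply: Hl; rewrite inE yl orbT.
Qed.

Lemma monoW_sub (S W : {set 'I_m}) : S \subset W ->
  Defs.monoW k W = Defs.monoW k (W :\: S) * Defs.monoW k S.
Proof.
move=> /subsetP SW; rewrite /Defs.monoW (bigID (mem S)) /= mulrC; congr (_ * _).
  apply: eq_bigl => i /=; rewrite !inE; by case: (i \in S); rewrite /= ?andbF ?andbT.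
idtac.
apply: eq_bigl => i /=.
by case iS: (i \in S); rewrite ?andbF // (SW i iS).
Qed.

Lemma xv_ord (i : 'I_m) : xv k m (val i).+1 = 'X_i.
Proof.
by rewrite /xv ltn_ord /= (big_pred1 i).
Qed.

Lemma prod_xv (s : seq nat) : uniq s -> (forall x, x \in s -> (0 < x <= m)%N) ->
  \prod_(x <- s) xv k m x = Defs.monoW k [set i : 'I_m | (val i).+1 \in s].
Proof.
elim: s => [|x s IH] /= us Hs.
  have -> : [set i : 'I_m | (val i).+1 \in [::]] = set0 by apply/setP => i; rewrite !inE.
  by rewrite big_nil /Defs.monoW big_set0.
case/andP: us => xs us.
have /andP [x0 xm] := Hs x (mem_head _ _).
have xm' : (x.-1 < m)%N by lia.
pose i0 := Ordinal xm'.
have ex : x = (val i0).+1 by rewrite /= prednK.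
rewrite big_cons IH //; last by move=> y ys; apply: Hs; rewrite inE ys orbT.
have -> : [set i : 'I_m | (val i).+1 \in x :: s] = i0 |: [set i : 'I_m | (val i).+1 \in s].
  by apply/setP => i; rewrite !inE ex eqSS val_eqE.
rewrite /Defs.monoW big_setU1 /=; first by rewrite ex xv_ord.
by rewrite inE -ex.
Qed.
End Ideal.

Set Implicit Arguments.
Unset Strict Implicit.

Section Nat.
Variables (R : realType) (m : nat) (t : 'I_m -> R).
Hypothesis incr : forall i j : 'I_m, (i < j)%N -> t i < t j.

Definition tn (j : nat) : R := if insub j is Some i then t i else 0.
Definition inW (W : {set 'I_m}) (j : nat) : bool :=
  if insub j is Some i then i \in W else false.

Lemma tn_val (i : 'I_m) : tn (val i) = t i.
Proof. by rewrite /tn valK. Qed.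

Lemma inW_val W (i : 'I_m) : inW W (val i) = (i \in W).
Proof. by rewrite /inW valK. Qed.

Lemma ord_of j : (j < m)%N -> exists i : 'I_m, val i = j.
Proof. by move=> h; exists (Ordinal h). Qed.

Lemma inW_lt W j : inW W j -> (j < m)%N.
Proof. by rewrite /inW; case: insubP => //= i _ <- _; exact: ltn_ord. Qed.

Lemma incTn i j : (i < j)%N -> (j < m)%N -> tn i < tn j.
Proof.
move=> ij jm; have [x ex] := ord_of jm; have [y ey] := ord_of (ltn_trans ij jm).
by rewrite -ex -ey !tn_val; apply: incr; rewrite ex ey.
Qed.

Lemma gap_far (s : seq nat) x y : sorted gaprel s -> x \in s -> y \in s ->
  x != y -> (x.+2 <= y)%N || (y.+2 <= x)%N.
Proof.
elim: s => [//|h s IH] srt.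
have mn := order_path_min gaprel_trans srt.
rewrite !inE => /orP [/eqP ->|xs] /orP [/eqP ->|ys]; rewrite ?eqxx //.
- by move=> _; move/allP: mn => /(_ y ys); rewrite /gaprel => ->.
- by move=> _; move/allP: mn => /(_ x xs); rewrite /gaprel => ->; rewrite orbT.
- exact: IH (path_sorted srt) xs ys.
Qed.


Variable d : nat.

Lemma notin_gap (s : seq nat) j : sorted gaprel s -> j \in s ->
  (0 < j)%N -> (j.-1 \notin s) && (j.+1 \notin s).
Proof.
move=> srt js j0; apply/andP; split; apply/negP => h.
- have := gap_far srt h js; rewrite neq_ltn; lia.
- have := gap_far srt h js; rewrite neq_ltn; lia.
Qed.

Lemma exists_notin (S : {set 'I_m}) : S != setT -> exists i, i \notin S.
Proof.
move=> ST; case: (pickP (fun i => i \notin S)) => [i Hi|H]; first by exists i.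
exfalso; move/negP: ST; apply; apply/eqP/setP => i; rewrite inE; have := H i; by case: (i \in S).
Qed.

Lemma gen1_nonface (s : seq nat) : sorted gaprel s -> (d.+1 = 2 * size s)%N ->
  (forall j, j \in s -> (0 < j)%N && (j.+2 <= m)%N) ->
  ~ face_cyc d t [set i : 'I_m | val i \in s].
Proof.
move=> srt sz rng F.
case: (@face_to_poly _ _ _ _ _ F) => [S0 | [ST [Q [sQ [Qge QW]]]]].
  case: s srt sz rng S0 F => [//|j s] _ _ rng S0 _.
  have /andP [_ jm] := rng j (mem_head _ _).
  have [i ei] := ord_of (j:=j) ltac:(lia).
  have : i \in [set i : 'I_m | val i \in j :: s] by rewrite inE ei mem_head.
  by rewrite S0 inE.
have Qpos : forall j, (j < m)%N -> j \notin s -> 0 < Q.[tn j].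
  move=> j jm js; have [i ei] := ord_of jm; rewrite -ei tn_val lt_neqAle Qge andbT.
  by apply/eqP => /esym /QW; rewrite inE ei (negbTE js).
have Qn0 : Q != 0.
  have [i iS] := exists_notin ST; apply/eqP => Q0; move: iS.
  by have := proj2 (QW i); rewrite Q0 horner0 => /(_ erefl) ->.
have := @roots_gap R m tn incTn Q s Qn0 srt.
have H : forall j, j \in s -> [/\ (0 < j)%N, (j.+1 < m)%N, Q.[tn j] = 0,
       0 < Q.[tn j.-1] & 0 < Q.[tn j.+1]].
  move=> j js; have /andP [j0 jm] := rng j js.
  have /andP [h1 h2] := notin_gap srt js j0.
  split => //.
  - have [i ei] := ord_of (j:=j) ltac:(lia).
    by rewrite -ei tn_val; apply/QW; rewrite inE ei.
  - by apply: Qpos => //; lia.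
  - by apply: Qpos.
move/(_ H) => h; lia.
Qed.

Lemma gen2_nonface (s : seq nat) : sorted gaprel s -> (d.+1 = 2 * size s + 2)%N ->
  (2 < m)%N ->
  (forall j, j \in s -> (1 < j)%N && (j.+3 <= m)%N) ->
  ~ face_cyc d t [set i : 'I_m | (val i \in s) || (val i == 0%N) || (val i == m.-1)].
Proof.
move=> srt sz m2 rng F.
set S := [set i : 'I_m | _] in F.
have inS : forall j, (j < m)%N -> (exists2 i : 'I_m, val i = j & (i \in S) =
    (j \in s) || (j == 0%N) || (j == m.-1)).
  by move=> j jm; have [i ei] := ord_of jm; exists i => //; rewrite inE ei.
case: (@face_to_poly _ _ _ _ _ F) => [S0 | [ST [Q [sQ [Qge QW]]]]].
  have [i _ ] := inS 0%N ltac:(lia).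
  by rewrite S0 inE eqxx !orbT.
have Qpos : forall j, (j < m)%N -> j \notin s -> j != 0%N -> j != m.-1 -> 0 < Q.[tn j].
  move=> j jm js j0 jm1; have [i ei iS] := inS _ jm; rewrite -ei tn_val lt_neqAle Qge andbT.
  by apply/eqP => /esym /QW; rewrite iS (negbTE js) (negbTE j0) (negbTE jm1).
have Qz : forall j, (j < m)%N -> (j \in s) || (j == 0%N) || (j == m.-1) -> Q.[tn j] = 0.
  move=> j jm h; have [i ei iS] := inS _ jm; rewrite -ei tn_val; apply/QW; by rewrite iS.
have Qn0 : Q != 0.
  have [i iS] := exists_notin ST; apply/eqP => Q0; move: iS.
  by have := proj2 (QW i); rewrite Q0 horner0 => /(_ erefl) ->.
have /factor_theorem [Q1 eQ1] : root Q (tn 0) by apply/eqP/Qz; rewrite ?eqxx ?orbT //; lia.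
have t0m : tn 0 < tn m.-1 by apply: incTn; lia.
have /factor_theorem [Q2 eQ2] : root Q1 (tn m.-1).
  apply/eqP; have := Qz m.-1 ltac:(lia) ltac:(by rewrite eqxx !orbT).
  rewrite eQ1 hornerM !hornerE => /eqP; rewrite mulf_eq0 subr_eq0 (gt_eqF t0m) orbF.
  by move/eqP.
have Q1n0 : Q1 != 0 by apply: contraNneq Qn0 => e; rewrite eQ1 e mul0r.
have Q2n0 : Q2 != 0 by apply: contraNneq Q1n0 => e; rewrite eQ2 e mul0r.
have szQ : size Q = (size Q2).+2.
  rewrite eQ1 eQ2 size_mul ?mulf_neq0 ?polyXsubC_eq0 // size_mul ?polyXsubC_eq0 //.
  by rewrite !size_XsubC !addn2.
have ev : forall p, (0 < p)%N -> (p < m.-1)%N -> Q.[tn p] =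
    (- Q2).[tn p] * ((tn p - tn 0) * (tn m.-1 - tn p)).
  move=> p p0 pm; rewrite eQ1 eQ2 hornerN !hornerM !hornerXsubC; ring.
have pos : forall p, (0 < p)%N -> (p < m.-1)%N -> 0 < (tn p - tn 0) * (tn m.-1 - tn p).
  move=> p p0 pm; apply: mulr_gt0; rewrite subr_gt0; apply: incTn; lia.
have := @roots_gap R m tn incTn (- Q2) s ltac:(by rewrite oppr_eq0) srt.
have H : forall j, j \in s -> [/\ (0 < j)%N, (j.+1 < m)%N, (- Q2).[tn j] = 0,
       0 < (- Q2).[tn j.-1] & 0 < (- Q2).[tn j.+1]].
  move=> j js; have /andP [j0 jm] := rng j js.
  have /andP [h1 h2] := notin_gap srt js (ltnW j0).
  have hj0 : (0 < j)%N by lia.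
  have hjm : (j < m.-1)%N by lia.
  have hp0 : (0 < j.-1)%N by lia.
  have hpm : (j.-1 < m.-1)%N by lia.
  have hq0 : (0 < j.+1)%N by lia.
  have hqm : (j.+1 < m.-1)%N by lia.
  split => //; first by lia.
  - have := Qz j ltac:(lia) ltac:(by rewrite js).
    rewrite (ev _ hj0 hjm) => /eqP; rewrite mulf_eq0 (gt_eqF (pos _ hj0 hjm)) orbF.
    by move/eqP.
  - have := Qpos j.-1 ltac:(lia) h1 ltac:(lia) ltac:(lia).
    by rewrite (ev _ hp0 hpm) pmulr_lgt0 // pos.
  - have := Qpos j.+1 ltac:(lia) h2 ltac:(lia) ltac:(lia).
    by rewrite (ev _ hq0 hqm) pmulr_lgt0 // pos.
move/(_ H); rewrite size_polyN => h; lia.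
Qed.
End Nat.

Set Implicit Arguments.
Unset Strict Implicit.

Lemma sorted_cat_gap (s1 s2 : seq nat) : sorted gaprel s1 -> sorted gaprel s2 ->
  (forall x y, x \in s1 -> y \in s2 -> (x.+2 <= y)%N) -> sorted gaprel (s1 ++ s2).
Proof.
rewrite !(sorted_pairwise gaprel_trans) pairwise_cat => -> -> H.
by rewrite !andbT; apply/allrelP => x y xs ys; apply: H.
Qed.

Lemma sorted_arith b k : sorted gaprel [seq (b + 2 * i)%N | i <- iota 0 k].
Proof.
rewrite sorted_map; apply: sub_sorted (iota_ltn_sorted 0 k) => i j /= ij.
rewrite /gaprel; lia.
Qed.

Lemma mem_arith b k x : x \in [seq (b + 2 * i)%N | i <- iota 0 k] ->
  exists2 i, (i < k)%N & x = (b + 2 * i)%N.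
Proof. by case/mapP => i; rewrite mem_iota add0n => /andP [_ ik] ->; exists i. Qed.

Lemma size_arith b k : size [seq (b + 2 * i)%N | i <- iota 0 k] = k.
Proof. by rewrite size_map size_iota. Qed.

Fixpoint pkf (A : nat -> bool) (j : nat) : bool :=
  match j with 0 => A 0%N | j'.+1 => A j'.+1 && ~~ pkf A j' end.

Lemma pkf_in (A : nat -> bool) j : pkf A j -> A j.
Proof. by case: j => [//|j] /= /andP []. Qed.

Lemma pkf_next (A : nat -> bool) j : pkf A j -> ~~ pkf A j.+1.
Proof. by move=> h /=; rewrite h andbF. Qed.

Lemma pkf_cover (A : nat -> bool) j : A j -> pkf A j || ((0 < j)%N && pkf A j.-1).
Proof. by case: j => [|j] /= -> //=; case: (pkf A j). Qed.

Lemma path_pk (A : nat -> bool) x s : path ltn x s -> pkf A x -> all (pkf A) s -> path gaprel x s.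
Proof.
elim: s x => [//|y s IH] x /= /andP [xy ps] px /andP [py ps'].
rewrite (IH y ps py ps') andbT /gaprel.
case: (ltngtP x.+1 y) => //; first by lia.
by move=> e; move: py; rewrite -e (negbTE (pkf_next px)).
Qed.

Lemma sorted_pk (A : nat -> bool) n : sorted gaprel [seq j <- iota 0 n | pkf A j].
Proof.
have := sorted_filter ltn_trans (pkf A) (iota_ltn_sorted 0 n).
have := filter_all (pkf A) (iota 0 n).
case: [seq j <- iota 0 n | pkf A j] => [//|x s] /= /andP [px ps] srt.
exact: (path_pk srt px ps).
Qed.

Lemma size_prod_le (R : nzSemiRingType) (I : Type) (s : seq I) (F : I -> {poly R}) k :
  (forall x, size (F x) <= k.+1)%N -> (size (\prod_(x <- s) F x)%R <= k * size s + 1)%N.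
Proof.
move=> H; elim: s => [|x s IH]; first by rewrite big_nil size_poly1 muln0.
rewrite big_cons; apply: leq_trans (size_polyMleq _ _) _.
have := H x; move: IH => /=; lia.
Qed.

Section Constr.
Variables (R : realType) (m : nat) (t : 'I_m -> R).
Hypothesis incr : forall i j : 'I_m, (i < j)%N -> t i < t j.
Variables (W : {set 'I_m}) (l r : nat).
Hypotheses (hl : (l < m)%N) (hr : (r < m)%N)
  (Wl : forall j, (j < l)%N -> inW W j) (nWl : ~~ inW W l)
  (Wr : forall j, (j < r)%N -> inW W (m.-1 - j)) (nWr : ~~ inW W (m.-1 - r))
  (lr : (l <= m.-1 - r)%N).

Let inc := incTn incr.

Definition inM j := [&& inW W j, (l < j)%N & (j < m.-1 - r)%N].
Definition Pk := [seq j <- iota 0 m | pkf inM j].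
Definition uu p := if inM p.+1 then tn t p.+1 else tn t p.
Definition Qc : {poly R} := (\prod_(j <- iota 0 l) ('X - (tn t j)%:P)) *
  (\prod_(j <- iota 0 r) ((tn t (m.-1 - j))%:P - 'X)) *
  \prod_(p <- Pk) (('X - (tn t p)%:P) * ('X - (uu p)%:P)).

Lemma Qc_size : (size Qc <= l + r + 2 * size Pk + 1)%N.
Proof.
have s1 : (size (\prod_(j <- iota 0 l) ('X - (tn t j)%:P))%R <= l + 1)%N.
  by rewrite size_prod_XsubC size_iota addn1.
have s2 : (size (\prod_(j <- iota 0 r) ((tn t (m.-1 - j))%:P - 'X))%R <= r + 1)%N.
  have := @size_prod_le _ _ (iota 0 r) (fun j => (tn t (m.-1 - j))%:P - 'X) 1.
  rewrite size_iota mul1n; apply => x; by rewrite -opprB size_polyN size_XsubC.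
have s3 : (size (\prod_(p <- Pk) (('X - (tn t p)%:P) * ('X - (uu p)%:P)))%R <= 2 * size Pk + 1)%N.
  apply: size_prod_le => x; apply: leq_trans (size_polyMleq _ _) _; by rewrite !size_XsubC.
rewrite /Qc; set A := \prod_(j <- _) _ in s1 *; set B := \prod_(j <- _) _ in s2 *.
set C := \prod_(p <- _) _ in s3 *.
have hAB : (size (A * B)%R <= l + r + 1)%N.
  apply: leq_trans (size_polyMleq _ _) _; rewrite -subn1.
  by apply: leq_trans (leq_sub2r 1 (leq_add s1 s2)) _; lia.
apply: leq_trans (size_polyMleq _ _) _; rewrite -subn1.
by apply: leq_trans (leq_sub2r 1 (leq_add hAB s3)) _; lia.
Qed.

Lemma inM_lt j : inM j -> (j < m)%N.
Proof. by case/and3P => /inW_lt. Qed.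

Lemma Qc_eval j : (j < m)%N ->
  (inW W j /\ Qc.[tn t j] = 0) \/ (~~ inW W j /\ 0 < Qc.[tn t j]).
Proof.
move=> jm.
have ev : Qc.[tn t j] = (\prod_(k <- iota 0 l) (tn t j - tn t k)) *
   (\prod_(k <- iota 0 r) (tn t (m.-1 - k) - tn t j)) *
   \prod_(p <- Pk) ((tn t j - tn t p) * (tn t j - uu p)).
  rewrite /Qc !hornerM !horner_prod; congr (_ * _ * _); apply: eq_bigr => k _.
  - by rewrite hornerXsubC.
  - by rewrite hornerD hornerN hornerX hornerC.
  - by rewrite hornerM !hornerXsubC.
case: (ltnP j l) => jl.
  left; split; first exact: Wl.
  rewrite ev; apply/eqP; rewrite !mulf_eq0; apply/orP; left; apply/orP; left.
  rewrite prodf_seq_eq0; apply/hasP; exists j; first by rewrite mem_iota.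
  by rewrite subrr eqxx.
case: (ltnP (m.-1 - r) j) => jr.
  left; split.
    have -> : j = (m.-1 - (m.-1 - j))%N by lia.
    by apply: Wr; lia.
  rewrite ev; apply/eqP; rewrite !mulf_eq0; apply/orP; left; apply/orP; right.
  rewrite prodf_seq_eq0; apply/hasP; exists (m.-1 - j)%N; first by rewrite mem_iota; lia.
  have -> : (m.-1 - (m.-1 - j))%N = j by lia.
  by rewrite subrr eqxx.
case Mj: (inM j).
  left; split; first by move: Mj => /and3P [].
  rewrite ev; apply/eqP; rewrite !mulf_eq0; apply/orP; right.
  rewrite prodf_seq_eq0; apply/hasP.
  case/orP: (pkf_cover Mj) => [pj | /andP [j0 pj]].
    exists j; first by rewrite mem_filter pj mem_iota.
    by rewrite subrr mul0r eqxx.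
  exists j.-1; first by rewrite mem_filter pj mem_iota; lia.
  by rewrite /uu prednK // Mj subrr mulr0 eqxx.
right.
have nW : ~~ inW W j.
  apply/negP => Wj.
  case: (ltngtP l j) => [lj | | ej]; [| lia |].
  - case: (ltngtP j (m.-1 - r)) => [jr' | | ej']; [ | lia | ].
    + by move: Mj; rewrite /inM Wj lj jr'.
    + by move: nWr; rewrite -ej' Wj.
  - by move: nWl; rewrite ej Wj.
split => //.
rewrite ev; apply: mulr_gt0; first apply: mulr_gt0.
- rewrite big_seq; apply: prodr_gt0 => k; rewrite mem_iota => /andP [_ kl].
  by rewrite subr_gt0; apply: inc => //; lia.
- rewrite big_seq; apply: prodr_gt0 => k; rewrite mem_iota => /andP [_ kr].
  by rewrite subr_gt0; apply: inc; lia.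
- rewrite big_seq; apply: prodr_gt0 => p; rewrite mem_filter mem_iota => /andP [pp /andP [_ pm]].
  have Mp := pkf_in pp.
  have pj : p != j by apply: contraTneq Mp => ->; rewrite Mj.
  rewrite /uu; case: (ltngtP j p) => [jp | pj' | ejp]; last by rewrite ejp eqxx in pj.
  + have h1 : tn t j < tn t p by apply: inc.
    have h2 : tn t p <= (if inM p.+1 then tn t p.+1 else tn t p).
      case: ifP => // Mp1; apply/ltW/inc => //; exact: inM_lt.
    rewrite -mulrNN; apply: mulr_gt0; rewrite oppr_gt0 subr_lt0 //.
    exact: lt_le_trans h1 h2.
  + case: ifP => Mp1.
    * have pj2 : (p.+1 < j)%N.
        case: (ltngtP p.+1 j) => //; first by lia.
        by move=> e; move: Mp1; rewrite e Mj.
      by apply: mulr_gt0; rewrite subr_gt0; apply: inc; lia.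
    * by apply: mulr_gt0; rewrite subr_gt0; apply: inc.
Qed.

Lemma Pk_in x : x \in Pk -> [&& (l < x)%N, (x < m.-1 - r)%N & inW W x].
Proof.
rewrite mem_filter => /andP [/pkf_in /and3P [h1 h2 h3] _].
by rewrite h1 h2 h3.
Qed.

Lemma cost_bound (a : nat) :
  (forall L, sorted gaprel L ->
     (forall x, x \in L -> [&& (0 < x)%N, (x.+2 <= m)%N & inW W x]) -> (size L < a)%N) ->
  (inW W 0 -> inW W m.-1 -> forall L, sorted gaprel L ->
     (forall x, x \in L -> [&& (1 < x)%N, (x.+3 <= m)%N & inW W x]) -> (size L < a.-1)%N) ->
  (l + r + 2 * size Pk < 2 * a)%N.
Proof.
move=> H1 H2.
have s1 := H1 ([seq (1 + 2 * i)%N | i <- iota 0 (l %/ 2)] ++ Pk ++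
   [seq ((m - 2 * (r %/ 2)) + 2 * i)%N | i <- iota 0 (r %/ 2)]).
have {s1} s1 : (l %/ 2 + size Pk + r %/ 2 < a)%N.
  rewrite -addnA; move: s1; rewrite !size_cat !size_arith; apply.
  - apply: sorted_cat_gap; first exact: sorted_arith.
      apply: sorted_cat_gap; [exact: sorted_pk | exact: sorted_arith |].
      move=> x y /Pk_in /and3P [h1 h2 _] /mem_arith [i ir ->]; lia.
    move=> x y /mem_arith [i il ->]; rewrite mem_cat => /orP [/Pk_in /and3P [h1 h2 _]| /mem_arith [j jr ->]]; lia.
  - move=> x; rewrite !mem_cat => /orP [/mem_arith [i il ->]|/orP [/Pk_in /and3P [h1 h2 h3]| /mem_arith [j jr ->]]].
    + by rewrite Wl; [apply/andP; split; lia | lia].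
    + by rewrite h3 andbT; apply/andP; split; lia.
    + have -> : (m - 2 * (r %/ 2) + 2 * j = m.-1 - (2 * (r %/ 2) - 2 * j).-1)%N by lia.
      by rewrite Wr; [apply/andP; split; lia | lia].
case: (posnP l) => [l0|lp]; first by lia.
case: (posnP r) => [r0|rp]; first by lia.
have W0 : inW W 0 by apply: Wl.
have Wm : inW W m.-1 by have := Wr rp; rewrite subn0.
have s2 := H2 W0 Wm ([seq (2 + 2 * i)%N | i <- iota 0 (l.-1 %/ 2)] ++ Pk ++
   [seq ((m.-1 - 2 * (r.-1 %/ 2)) + 2 * i)%N | i <- iota 0 (r.-1 %/ 2)]).
have {s2} s2 : (l.-1 %/ 2 + size Pk + r.-1 %/ 2 < a.-1)%N.
  rewrite -addnA; move: s2; rewrite !size_cat !size_arith; apply.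
  - apply: sorted_cat_gap; first exact: sorted_arith.
      apply: sorted_cat_gap; [exact: sorted_pk | exact: sorted_arith |].
      move=> x y /Pk_in /and3P [h1 h2 _] /mem_arith [i ir ->]; lia.
    move=> x y /mem_arith [i il ->]; rewrite mem_cat => /orP [/Pk_in /and3P [h1 h2 _]| /mem_arith [j jr ->]]; lia.
  - move=> x; rewrite !mem_cat => /orP [/mem_arith [i il ->]|/orP [/Pk_in /and3P [h1 h2 h3]| /mem_arith [j jr ->]]].
    + by rewrite Wl; [apply/andP; split; lia | lia].
    + by rewrite h3 andbT; apply/andP; split; lia.
    + have -> : (m.-1 - 2 * (r.-1 %/ 2) + 2 * j = m.-1 - (2 * (r.-1 %/ 2) - 2 * j))%N by lia.
      by rewrite Wr; [apply/andP; split; lia | lia].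
lia.
Qed.
End Constr.

Lemma construct_face (R : realType) (m : nat) (t : 'I_m -> R)
  (incr : forall i j : 'I_m, (i < j)%N -> t i < t j) (W : {set 'I_m}) (d a : nat) :
  (2 * a = d.+1)%N -> (d.+2 <= m)%N ->
  (forall L, sorted gaprel L ->
     (forall x, x \in L -> [&& (0 < x)%N, (x.+2 <= m)%N & inW W x]) -> (size L < a)%N) ->
  (inW W 0 -> inW W m.-1 -> forall L, sorted gaprel L ->
     (forall x, x \in L -> [&& (1 < x)%N, (x.+3 <= m)%N & inW W x]) -> (size L < a.-1)%N) ->
  face_cyc d t W.
Proof.
move=> ha hdm H1 H2.
have WT : W != setT.
  apply/negP => /eqP WT.
  suff : (a < a)%N by rewrite ltnn.
  have := H1 [seq (1 + 2 * i)%N | i <- iota 0 a] (sorted_arith _ _).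
  rewrite size_arith; apply => x /mem_arith [i ia ->].
  have xm : (1 + 2 * i < m)%N by lia.
  have [j ej] := ord_of xm; rewrite -ej inW_val WT inE ej; apply/andP; split; lia.
have [i0 iW] := exists_notin WT.
have exl : exists j, (j < m)%N && ~~ inW W j.
  by exists (val i0); rewrite ltn_ord inW_val iW.
have hi0 : (val i0 < m)%N := ltn_ord i0.
have exr : exists j, (j < m)%N && ~~ inW W (m.-1 - j).
  exists (m.-1 - val i0)%N; rewrite (_ : m.-1 - (m.-1 - val i0) = val i0)%N; last first.
    by lia.
  by rewrite inW_val iW andbT; lia.
case: (ex_minnP exl) => l /andP [hl nWl] minl.
case: (ex_minnP exr) => r /andP [hr nWr] minr.
have Wl : forall j, (j < l)%N -> inW W j.
  move=> j jl; apply/negPn/negP => nj.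
  by have := minl j; rewrite nj andbT => /(_ (ltn_trans jl hl)); lia.
have Wr : forall j, (j < r)%N -> inW W (m.-1 - j).
  move=> j jr; apply/negPn/negP => nj.
  by have := minr j; rewrite nj andbT => /(_ (ltn_trans jr hr)); lia.
have lr : (l <= m.-1 - r)%N.
  by apply: minl; rewrite nWr andbT; lia.
have cb := cost_bound hl hr Wl nWl Wr nWr lr H1 H2.
have sz := Qc_size t hl hr nWl nWr lr.
apply: (@poly_to_face _ _ _ _ W (Qc t W l r)) => //.
- by apply: leq_trans sz _; lia.
- move=> i; have := Qc_eval incr hl hr Wl nWl Wr nWr lr (ltn_ord i).
  by rewrite tn_val => [[[_ ->]|[_ /ltW]]].
- move=> i; have := Qc_eval incr hl hr Wl nWl Wr nWr lr (ltn_ord i).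
  rewrite tn_val inW_val => [[[-> ->]|[/negbTE -> /gt_eqF h]]] //.
  by split => // /eqP; rewrite h.
Qed.

Set Implicit Arguments.
Unset Strict Implicit.

Lemma gap_uniq (s : seq nat) : sorted gaprel s -> uniq s.
Proof.
move=> h; apply: (sorted_uniq ltn_trans ltnn).
by apply: sub_sorted h => x y; rewrite /gaprel; lia.
Qed.

Lemma sorted_up (s : seq nat) : sorted gaprel s -> sorted gaprel (map succn s).
Proof. by move=> h; rewrite sorted_map; apply: sub_sorted h => x y; rewrite /gaprel /=. Qed.

Lemma sorted_down (s : seq nat) : sorted gaprel s -> (forall x, x \in s -> (0 < x)%N) ->
  sorted gaprel (map predn s).
Proof.
move=> h pos; apply: (homo_sorted_in (P := fun x => (0 < x)%N)) h.
  by move=> x y x0 y0; rewrite /gaprel; lia.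
by apply/allP => x /pos.
Qed.

Section Gens.
Variables (k : fieldType) (m : nat).

Lemma iapq_to_list a p q g : @Iapq_gen k m a p q g -> exists s : seq nat,
  [/\ size s = a, sorted gaprel s, (forall x, x \in s -> (p <= x <= q)%N) &
      g = \prod_(x <- s) xv k m x].
Proof.
case=> s [sz rng gp ->]; exists s; split => //.
- apply/(sortedP 0%N) => i ih; rewrite /gaprel; have := gp i; rewrite sz in ih.
  by move/(_ ih); lia.
- by move=> x /(nthP 0%N) [i ih <-]; apply: rng; rewrite -sz.
Qed.

Lemma list_to_iapq a p q s : size s = a -> sorted gaprel s ->
  (forall x, x \in s -> (p <= x <= q)%N) -> @Iapq_gen k m a p q (\prod_(x <- s) xv k m x).
Proof.
move=> sz srt rng; exists s; split => //.
- by move=> j ja; apply: rng; apply: mem_nth; rewrite sz.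
- move=> j ja; move/(sortedP 0%N): srt => /(_ j); rewrite sz => /(_ ja).
  by rewrite /gaprel; lia.
Qed.
End Gens.

Lemma mem_shift (s : seq nat) (x : nat) : (forall y, y \in s -> (0 < y)%N) ->
  (x \in map predn s) = (x.+1 \in s).
Proof.
move=> pos; apply/mapP/idP => [[y ys ->]|h]; first by rewrite prednK ?pos.
by exists x.+1.
Qed.

Unset Implicit Arguments.
Set Strict Implicit.

Theorem proposition4p1 (k : fieldType) (R : realType) (d m : nat)
  (t : 'I_m -> R) :
  odd d -> (5 <= d)%N -> (d < m.-1)%N ->
  (forall i j : 'I_m, (i < j)%N -> t i < t j) ->
  forall p : {mpoly k[m]},
    in_gen_ideal (@SR_gen k R d m t) p <-> in_gen_ideal (@J_gen k m d.+1./2) p.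
Proof.
move=> dodd d5 dm incr p.
set a := d.+1./2.
have ha : (2 * a = d.+1)%N.
  have := odd_double_half d.+1; rewrite /= dodd /= -/a -mul2n add0n; done.
have m2 : (d.+2 <= m)%N by lia.
have a3 : (3 <= a)%N by lia.
split; apply: ideal_trans => g.
- case=> W [nF ->].
  have [c1|nc1] := classic (exists L, [/\ sorted gaprel L,
     (forall x, x \in L -> [&& (0 < x)%N, (x.+2 <= m)%N & inW W x]) & (a <= size L)%N]).
    case: c1 => L [sL hL aL].
    have sL' : sorted gaprel (take a L) := take_sorted a sL.
    have inL : forall x, x \in take a L -> [&& (0 < x)%N, (x.+2 <= m)%N & inW W x].
      by move=> x h; apply: hL; apply: mem_take h.
    set s := map succn (take a L).
    have ss : sorted gaprel s := sorted_up sL'.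
    have szs : size s = a by rewrite size_map size_takel.
    have rs : forall x, x \in s -> (2 <= x <= m.-1)%N.
      by move=> x /mapP [y /inL /and3P [h1 h2 _] ->]; lia.
    set S := [set i : 'I_m | (val i).+1 \in s].
    have gS : \prod_(x <- s) xv k m x = Defs.monoW k S.
      apply: prod_xv; first exact: gap_uniq.
      by move=> x /rs; lia.
    have SW : S \subset W.
      apply/subsetP => i; rewrite inE => /mapP [y yL /eqP]; rewrite eqSS => /eqP ey.
      by have /and3P [_ _] := inL y yL; rewrite -ey inW_val.
    rewrite (@monoW_sub k m S W SW); apply: ideal_mul; apply: ideal_gen; left.
    by rewrite -gS; apply: list_to_iapq.
  have [c2|nc2] := classic (inW W 0 /\ inW W m.-1 /\ exists L, [/\ sorted gaprel L,
     (forall x, x \in L -> [&& (1 < x)%N, (x.+3 <= m)%N & inW W x]) & (a.-1 <= size L)%N]).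
    case: c2 => W0 [Wm [L [sL hL aL]]].
    have sL' : sorted gaprel (take a.-1 L) := take_sorted a.-1 sL.
    have inL : forall x, x \in take a.-1 L -> [&& (1 < x)%N, (x.+3 <= m)%N & inW W x].
      by move=> x h; apply: hL; apply: mem_take h.
    set s := map succn (take a.-1 L).
    have ss : sorted gaprel s := sorted_up sL'.
    have szs : size s = a.-1 by rewrite size_map size_takel.
    have rs : forall x, x \in s -> (3 <= x <= m - 2)%N.
      by move=> x /mapP [y /inL /and3P [h1 h2 _] ->]; lia.
    set S := [set i : 'I_m | (val i).+1 \in 1%N :: m :: s].
    have gS : \prod_(x <- 1%N :: m :: s) xv k m x = Defs.monoW k S.
      apply: prod_xv.
        rewrite /= gap_uniq // andbT inE negb_or -andbA; apply/and3P; split.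
        + by apply/eqP; lia.
        + by apply/negP => /rs; lia.
        + by apply/negP => /rs; lia.
      move=> x; rewrite !inE => /orP [/eqP ->|/orP [/eqP ->|/rs]]; lia.
    have SW : S \subset W.
      apply/subsetP => i; rewrite !inE => /orP [/eqP [e]|/orP [/eqP e|]].
      + by move: W0; rewrite -e inW_val.
      + have ei : m.-1 = val i := congr1 predn (esym e).
        by move: Wm; rewrite ei inW_val.
      + move=> /mapP [y yL /eqP]; rewrite eqSS => /eqP ey.
        by have /and3P [_ _] := inL y yL; rewrite -ey inW_val.
    rewrite (@monoW_sub k m S W SW); apply: ideal_mul; apply: ideal_gen; right.
    exists (\prod_(x <- s) xv k m x); split; first exact: list_to_iapq.
    by rewrite -gS !big_cons mulrA.
  exfalso; apply: nF; apply: (@construct_face _ _ _ incr W d a) => //.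
  + move=> L sL hL; rewrite ltnNge; apply/negP => aL; apply: nc1; by exists L.
  + move=> W0 Wm L sL hL; rewrite ltnNge; apply/negP => aL; apply: nc2.
    by split => //; split => //; exists L.
- move=> Jg; apply: ideal_gen.
  case: Jg => [/iapq_to_list [s [sz ss rng ->]] | [h [/iapq_to_list [s [sz ss rng ->]] ->]]].
  + have pos : forall x, x \in s -> (0 < x)%N by move=> x /rng; lia.
    exists [set i : 'I_m | (val i).+1 \in s]; split; last first.
      by apply: prod_xv; [exact: gap_uniq | move=> x /rng; lia].
    have := @gen1_nonface R m t incr d (map predn s) (sorted_down ss pos).
    have -> : [set i : 'I_m | val i \in map predn s] = [set i : 'I_m | (val i).+1 \in s].
      by apply/setP => i; rewrite !inE mem_shift.
    apply; first by rewrite size_map sz.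
    by move=> j; rewrite mem_shift // => /rng; lia.
  + have pos : forall x, x \in s -> (0 < x)%N by move=> x /rng; lia.
    exists [set i : 'I_m | (val i).+1 \in 1%N :: m :: s]; split; last first.
      have -> : xv k m 1 * xv k m m * \prod_(x <- s) xv k m x = \prod_(x <- 1%N :: m :: s) xv k m x by rewrite !big_cons mulrA.
      apply: prod_xv.
        rewrite /= gap_uniq // andbT inE negb_or -andbA; apply/and3P; split.
        + by apply/eqP; lia.
        + by apply/negP => /rng; lia.
        + by apply/negP => /rng; lia.
      move=> x; rewrite !inE => /orP [/eqP ->|/orP [/eqP ->|/rng]]; lia.
    have := @gen2_nonface R m t incr d (map predn s) (sorted_down ss pos).
    have -> : [set i : 'I_m | (val i \in map predn s) || (val i == 0%N) || (val i == m.-1)]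
        = [set i : 'I_m | (val i).+1 \in 1%N :: m :: s].
      apply/setP => i; rewrite !inE mem_shift // eqSS.
      have -> : ((val i).+1 == m) = (val i == m.-1).
        by apply/idP/idP => /eqP h1; apply/eqP; lia.
      by case: (_ \in s); case: (val i == 0%N); case: (val i == m.-1).
    apply; first by rewrite size_map sz; lia.
    - by lia.
    - by move=> j; rewrite mem_shift // => /rng; lia.
Qed.
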